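(* Let $i,j\ge 1$ be integers with $i+j\ge 16$, and let $m=i+j+2(i+j)^{3/4}$. Let $S'$ be a set of $m$ distinct elements of a totally ordered universe, where the rank of an element of $S'$ is its position in increasing order ($1$ for the smallest, $m$ for the largest). Let $R$ be a multiset of $m^{3/4}$ elements of $S'$ drawn uniformly and independently at random with replacement, and let $k=j\,m^{-1/4}+m^{1/2}/2$. Let $E_1$ be the event that at least $k$ of the samples in $R$ (counted with multiplicity) have rank at most $j$ in $S'$, and let $E_2$ be the event that at least $m^{3/4}-k$ of the samples in $R$ (counted with multiplicity) have rank at least $m-i+1$ in $S'$. Then ${\rm Prob}(E_1)\le m^{-1/4}$ and ${\rm Prob}(E_2)\le m^{-1/4}$.
   Context: Quantities such as $m^{3/4}$, $m^{1/2}/2$ and $j\,m^{-1/4}$ are treated as integers (floors/ceilings omitted). *)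

(* Defs.v *)
From mathcomp Require Import all_boot all_order all_algebra.
From mathcomp Require Import all_classical all_reals all_analysis.
Unset Printing Implicit Defensive.
Import Order.TTheory GRing.Theory Num.Theory.
Local Open Scope ring_scope.

(* Rounding convention (floors omitted in the paper): integer-valued
   quantities are rounded down. *)

Definition msize (R : realType) (i j : nat) : nat :=
  (i + j + Num.truncn (2 * ((i + j)%:R : R) `^ (3 / 4)))%N.

Definition ssize (R : realType) (m : nat) : nat :=
  Num.truncn ((m%:R : R) `^ (3 / 4)).

Definition kthr (R : realType) (j m : nat) : R :=
  (j%:R * (m%:R `^ (- (1 / 4)))) + (m%:R `^ (1 / 2)) / 2.

(* S' is identified with its ranks: element r : 'I_m has rank r+1.
   A sample R is a function 'I_s -> 'I_m (s draws with replacement),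
   drawn uniformly among the m^s possibilities. *)
Definition prob_unif (R : realType) (s m : nat) (E : pred {ffun 'I_s -> 'I_m}) : R :=
  #|[set f : {ffun 'I_s -> 'I_m} | E f]|%:R / (#|{ffun 'I_s -> 'I_m}|)%:R.

Definition cnt_low {s m : nat} (j : nat) (f : {ffun 'I_s -> 'I_m}) : nat :=
  #|[set t : 'I_s | (f t).+1 <= j]%N|.

Definition cnt_high {s m : nat} (i : nat) (f : {ffun 'I_s -> 'I_m}) : nat :=
  #|[set t : 'I_s | (m - i + 1 <= (f t).+1)%N]|.

Definition E1 (R : realType) (i j : nat) : pred {ffun 'I_(ssize R (msize R i j)) -> 'I_(msize R i j)} :=
  fun f => kthr R j (msize R i j) <= (cnt_low j f)%:R.

Definition E2 (R : realType) (i j : nat) : pred {ffun 'I_(ssize R (msize R i j)) -> 'I_(msize R i j)} :=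
  fun f => (ssize R (msize R i j))%:R - kthr R j (msize R i j) <= (cnt_high i f)%:R.

(* Main.v *)
Require Import Defs.
From mathcomp Require Import all_boot all_order all_algebra.
From mathcomp Require Import all_classical all_reals all_analysis.
From mathcomp Require Import ring lra zify.
From Stdlib Require Import Lia.
Import Order.TTheory GRing.Theory Num.Theory.
Local Open Scope ring_scope.
Section Comb.
Variable R : realType.
Variables s m : nat.
Implicit Types (F G : 'I_m -> R).
Lemma eqle (x y : R) : x = y -> x <= y. Proof. by move->. Qed.

Lemma sum_ffun_prod (H : 'I_s -> 'I_m -> R) :
  \sum_(f : {ffun 'I_s -> 'I_m}) \prod_t H t (f t) = \prod_t \sum_x H t x.
Proof. by rewrite bigA_distr_bigA. Qed.

Lemma sum_ffun1 F (t0 : 'I_s) :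
  \sum_(f : {ffun 'I_s -> 'I_m}) F (f t0) = (m%:R ^+ s.-1) * \sum_x F x.
Proof.
pose H t x := if t == t0 then F x else 1.
transitivity (\sum_(f : {ffun 'I_s -> 'I_m}) \prod_t H t (f t)).
  apply: eq_bigr => f _; rewrite (bigD1 t0) //= /H eqxx big1 ?mulr1 //.
  by move=> t /negbTE ->.
rewrite sum_ffun_prod (bigD1 t0) //= /H eqxx mulrC; congr (_ * _).
rewrite (eq_bigr (fun _ => (m%:R : R))); last first.
  by move=> t /negbTE ->; rewrite sumr_const card_ord.
by rewrite prodr_const cardC1 card_ord.
Qed.

Lemma sum_ffun2 F G (t0 u0 : 'I_s) : t0 != u0 -> \sum_x G x = 0 ->
  \sum_(f : {ffun 'I_s -> 'I_m}) F (f t0) * G (f u0) = 0.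
Proof.
move=> ne G0.
pose H t x := if t == t0 then F x else if t == u0 then G x else 1.
transitivity (\sum_(f : {ffun 'I_s -> 'I_m}) \prod_t H t (f t)).
  apply: eq_bigr => f _; rewrite (bigD1 t0) //= (bigD1 u0) /=; last by rewrite eq_sym.
  rewrite /H eqxx (negbTE (_ : u0 != t0)) ?eqxx; last by rewrite eq_sym.
  rewrite big1 ?mulr1 // => t /andP [/negbTE -> /negbTE ->] //.
rewrite sum_ffun_prod (bigD1 u0) //= /H.
by rewrite eq_sym (negbTE ne) eqxx G0 mul0r.
Qed.

Lemma var_sum (g : 'I_m -> R) : \sum_x g x = 0 ->
  \sum_(f : {ffun 'I_s -> 'I_m}) (\sum_t g (f t)) ^+ 2
    = s%:R * (m%:R ^+ s.-1) * \sum_x g x ^+ 2.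
Proof.
move=> g0.
rewrite (eq_bigr (fun f : {ffun 'I_s -> 'I_m} =>
   \sum_t \sum_u g (f t) * g (f u))); last first.
  move=> f _; rewrite expr2 mulr_suml; apply: eq_bigr => t _.
  by rewrite mulr_sumr.
rewrite exchange_big /=.
rewrite (eq_bigr (fun _ => m%:R ^+ s.-1 * \sum_x g x ^+ 2)); last first.
  move=> t _; rewrite exchange_big /= (bigD1 t) //=.
  rewrite [X in _ + X]big1 ?addr0; last first.
    by move=> u ne; apply: sum_ffun2; rewrite // eq_sym.
  rewrite -(sum_ffun1 (fun x => g x ^+ 2) t).
  by apply: eq_bigr => f _; rewrite expr2.
by rewrite sumr_const card_ord -mulr_natl; ring.
Qed.

Lemma cnt_sum (A : pred 'I_m) (f : {ffun 'I_s -> 'I_m}) :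
  (#|[set t | f t \in A]|)%:R = \sum_t ((f t \in A)%:R : R).
Proof.
rewrite -sum1_card natr_sum big_mkcond /=; apply: eq_bigr => t _.
by rewrite inE; case: (f t \in A).
Qed.

Lemma cardA_sum (A : pred 'I_m) : (#|A|)%:R = \sum_x ((x \in A)%:R : R).
Proof.
rewrite -sum1_card natr_sum big_mkcond /=; apply: eq_bigr => t _.
by case: (t \in A).
Qed.

Lemma cheb (A : pred 'I_m) (E : pred {ffun 'I_s -> 'I_m}) (tt : R) :
  (0 < m)%N -> 0 < tt ->
  (forall f, E f -> tt ^+ 2 <=
     ((#|[set t | f t \in A]|)%:R - s%:R * (#|A|)%:R / m%:R) ^+ 2) ->
  prob_unif R s m E <= s%:R / (4 * tt ^+ 2).
Proof.
move=> m0 tt0 HE.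
have mR : 0 < (m%:R : R) by rewrite ltr0n.
set a : R := (#|A|)%:R.
have a0 : 0 <= a by rewrite /a ler0n.
have am : a <= m%:R.
  by rewrite /a ler_nat; apply: leq_trans (max_card _) _; rewrite card_ord.
set p := a / m%:R.
pose g x := ((x \in A)%:R : R) - p.
have g0 : \sum_x g x = 0.
  rewrite /g sumrB -cardA_sum sumr_const card_ord -/a /p.
  rewrite -mulr_natr; field; lra.
have g2 : \sum_x g x ^+ 2 = a - a ^+ 2 / m%:R.
  rewrite (eq_bigr (fun x => ((x \in A)%:R : R) * (1 - 2 * p) + p ^+ 2)); last first.
    by move=> x _; rewrite /g; case: (x \in A); rewrite /= ?mul1r ?mul0r; ring.
  rewrite big_split /= -mulr_suml -cardA_sum sumr_const card_ord -/a /p -mulr_natr.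
  field; lra.
have g2le : \sum_x g x ^+ 2 <= m%:R / 4.
  rewrite g2; apply: (@le_trans _ _ (a - a ^+ 2 / m%:R + (m%:R - 2 * a) ^+ 2 / (4 * m%:R))).
    rewrite lerDl; apply: divr_ge0; first exact: sqr_ge0.
    lra.
  apply: eqle; field; lra.
have Hf : forall f : {ffun 'I_s -> 'I_m},
  (#|[set t | f t \in A]|)%:R - s%:R * a / m%:R = \sum_t g (f t).
  move=> f; rewrite cnt_sum /g sumrB sumr_const card_ord /p -mulr_natl.
  congr (_ - _); ring.
have Hsum : (#|[set f | E f]|)%:R * tt ^+ 2 <=
            s%:R * (m%:R ^+ s.-1) * (m%:R / 4).
  apply: (@le_trans _ _ (\sum_(f : {ffun 'I_s -> 'I_m}) (\sum_t g (f t)) ^+ 2)).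
    rewrite -sum1_card natr_sum mulr_suml big_mkcond /=.
    apply: ler_sum => f _; rewrite inE.
    case Ef: (E f); last exact: sqr_ge0.
    by rewrite mul1r -Hf; apply: HE.
  rewrite var_sum //; apply: ler_wpM2l => //.
rewrite /prob_unif card_ffun !card_ord natrX.
rewrite ler_pdivrMr ?exprn_gt0 //.
rewrite mulrAC ler_pdivlMr; last by rewrite mulr_gt0 // exprn_gt0.
have e : forall k : nat, (k%:R : R) * m%:R ^+ k.-1 * (m%:R / 4) = k%:R * m%:R ^+ k / 4.
  by case=> [|k]; [rewrite !mul0r | rewrite /= exprS; ring].
rewrite e in Hsum; lra.
Qed.
End Comb.

Section Real.
Variable R : realType.

Lemma lerXK k (a b : R) : (0 < k)%N -> 0 <= a -> 0 <= b -> a ^+ k <= b ^+ k -> a <= b.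
Proof. by move=> k0 a0 b0; rewrite ler_pXn2r // nnegrE. Qed.

Lemma ltrXK k (a b : R) : (0 < k)%N -> 0 <= a -> 0 <= b -> a ^+ k < b ^+ k -> a < b.
Proof. by move=> k0 a0 b0; rewrite ltr_pXn2r // nnegrE. Qed.

Lemma P_ge (y : R) : 5/2 <= y ->
  (y^+3 + y + 1)^+4 <= 16 * (y^+4 - y^+3 - y)^+3.
Proof.
move=> hy; set z := y - 5/2.
have z0 : 0 <= z by rewrite /z; lra.
have -> : y = 5/2 + z by rewrite /z; ring.
nra.
Qed.

Lemma key_gen (n d s : nat) (x y : R) : (21 <= n)%N -> 0 <= x ->
  x ^+ 4 = n%:R -> 2 * x ^+ 3 < d%:R + 1 -> 0 <= y -> y ^+ 4 = n%:R + d%:R ->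
  y ^+ 3 < s%:R + 1 -> y ^+ 3 + n%:R <= y * s%:R.
Proof.
move=> n21 x0 x4 xd y0 y4 ys.
have n21R : 21 <= (n%:R : R) by rewrite (ler_nat R 21 n).
have x3 : 19 <= 2 * x ^+ 3.
  apply: (@lerXK 4) => //; first by rewrite mulr_ge0 // exprn_ge0.
  have -> : (2 * x ^+ 3) ^+ 4 = 16 * (x ^+ 4) ^+ 3 by ring.
  rewrite x4.
  have : (21:R) ^+ 3 <= n%:R ^+ 3 by rewrite lerXn2r // nnegrE.
  lra.
have d19 : 19 <= (d%:R : R).
  have : (18 < d)%N by rewrite -(ltr_nat R); lra.
  by rewrite -(ler_nat R) => h; apply: le_trans h; rewrite (ler_nat R 19 19).
have y52 : 5/2 <= y.
  apply: (@lerXK 4) => //; rewrite ?y4; lra.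
have [hd|hd] := leP (y ^+ 3 + y) (d%:R).
  have : 0 <= y * (s%:R + 1 - y ^+ 3) by rewrite mulr_ge0 // subr_ge0 ltW.
  have -> : y * (s%:R + 1 - y ^+ 3) = y * s%:R + y - y ^+ 4 by ring.
  rewrite y4; lra.
exfalso.
set w := y ^+ 4 - y ^+ 3 - y.
have w0 : 0 <= w.
  rewrite /w; have -> : y ^+ 4 - y ^+ 3 - y = y * (y ^+ 3 - y ^+ 2 - 1) by ring.
  apply: mulr_ge0 => //; nra.
have xw : w < x ^+ 4 by rewrite /w x4; lra.
have xw3 : w ^+ 3 < (x ^+ 4) ^+ 3 by rewrite ltrXn2r.
have h1 : (2 * x ^+ 3) ^+ 4 < (d%:R + 1) ^+ 4.
  by rewrite ltrXn2r // mulr_ge0 // exprn_ge0.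
have h2 : (d%:R + 1) ^+ 4 < (y ^+ 3 + y + 1) ^+ 4.
  by rewrite ltrXn2r //; lra.
have := @P_ge y y52; rewrite -/w.
have e : (2 * x ^+ 3) ^+ 4 = 16 * (x ^+ 4) ^+ 3 by ring.
rewrite e in h1; lra.
Qed.

Lemma key_spec (n d s : nat) (x y : R) (d0 s0 : nat) (a b : R) :
  (d0%:R : R) ^+ 4 <= 16 * (n%:R) ^+ 3 -> 16 * (n%:R : R) ^+ 3 < (d0%:R + 1) ^+ 4 ->
  (s0%:R : R) ^+ 4 <= (n%:R + d0%:R) ^+ 3 ->
  a ^+ 4 <= n%:R + d0%:R -> n%:R + d0%:R <= b ^+ 4 -> 0 <= a -> 0 <= b ->
  b ^+ 3 + n%:R <= a * s0%:R ->
  0 <= x -> x ^+ 4 = n%:R -> d%:R <= 2 * x ^+ 3 -> 2 * x ^+ 3 < d%:R + 1 ->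
  0 <= y -> y ^+ 4 = n%:R + d%:R -> y ^+ 3 < s%:R + 1 ->
  y ^+ 3 + n%:R <= y * s%:R.
Proof.
move=> hd1 hd2 hs0 ha hb a0 b0 hab x0 x4 xd1 xd2 y0 y4 ys.
have e : (2 * x ^+ 3) ^+ 4 = 16 * (x ^+ 4) ^+ 3 by ring.
have x3 : 0 <= 2 * x ^+ 3 by rewrite mulr_ge0 // exprn_ge0.
have l1 : d0%:R <= 2 * x ^+ 3.
  by apply: (@lerXK 4) => //; rewrite e x4.
have l2 : 2 * x ^+ 3 < d0%:R + 1.
  apply: (@ltrXK 4) => //; rewrite ?e ?x4 //; lra.
have dd : d = d0.
  have h1 : (d < d0.+1)%N by rewrite -(ltr_nat R) -natr1; apply: le_lt_trans xd1 l2.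
  have h2 : (d0 < d.+1)%N by rewrite -(ltr_nat R) -natr1; apply: le_lt_trans l1 xd2.
  by apply/eqP; rewrite eqn_leq; apply/andP; split; [exact: h1 | exact: h2].
subst d0.
have ay : a <= y by apply: (@lerXK 4) => //; rewrite y4.
have yb : y <= b by apply: (@lerXK 4) => //; rewrite y4.
have s0y : s0%:R <= y ^+ 3.
  apply: (@lerXK 4) => //; first by rewrite exprn_ge0.
  by rewrite -exprM mulnC exprM y4.
have ss : (s0 <= s)%N.
  have : (s0 < s.+1)%N by rewrite -(ltr_nat R) -natr1; apply: le_lt_trans s0y ys.
  by [].
have ssR : (s0%:R : R) <= s%:R by rewrite ler_nat.
have yb3 : y ^+ 3 <= b ^+ 3 by rewrite lerXn2r // nnegrE.
have : y * s0%:R <= y * s%:R by rewrite ler_wpM2l.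
have : a * s0%:R <= y * s0%:R by rewrite ler_wpM2r.
lra.
Qed.

Lemma key (n d s : nat) (x y : R) : (16 <= n)%N -> 0 <= x ->
  x ^+ 4 = n%:R -> d%:R <= 2 * x ^+ 3 -> 2 * x ^+ 3 < d%:R + 1 ->
  0 <= y -> y ^+ 4 = n%:R + d%:R ->
  y ^+ 3 < s%:R + 1 -> y ^+ 3 + n%:R <= y * s%:R.
Proof.
move=> n16 x0 x4 xd1 xd2 y0 y4 ys.
have [n21|n21] := leqP 21 n; first exact: (@key_gen n d s x y n21 x0 x4 xd2 y0 y4 ys).
have : n = 16%N \/ n = 17%N \/ n = 18%N \/ n = 19%N \/ n = 20%N by lia.
move=> [?|[?|[?|[?|?]]]]; subst n.
- apply: (@key_spec 16 d s x y 16 13 (237/100) (238/100) _ _ _ _ _ _ _ _ x0 x4 xd1 xd2 y0 y4 ys);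
    clear x4 xd1 xd2 y4 ys; lra.
- apply: (@key_spec 17 d s x y 16 13 (239/100) (240/100) _ _ _ _ _ _ _ _ x0 x4 xd1 xd2 y0 y4 ys);
    clear x4 xd1 xd2 y4 ys; lra.
- apply: (@key_spec 18 d s x y 17 14 (243/100) (244/100) _ _ _ _ _ _ _ _ x0 x4 xd1 xd2 y0 y4 ys);
    clear x4 xd1 xd2 y4 ys; lra.
- apply: (@key_spec 19 d s x y 18 15 (246/100) (247/100) _ _ _ _ _ _ _ _ x0 x4 xd1 xd2 y0 y4 ys);
    clear x4 xd1 xd2 y4 ys; lra.
- apply: (@key_spec 20 d s x y 18 15 (248/100) (249/100) _ _ _ _ _ _ _ _ x0 x4 xd1 xd2 y0 y4 ys);
    clear x4 xd1 xd2 y4 ys; lra.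
Qed.
End Real.

Section S. Variable R : realType.
Lemma powq (a : R) (k : nat) : 0 <= a -> (a `^ (1/4)) ^+ k = a `^ (k%:R / 4).
Proof.
move=> a0; rewrite -powR_mulrn ?powR_ge0 // -powRrM; congr (_ `^ _); ring.
Qed.
Lemma pow4 (a : R) : 0 <= a -> (a `^ (1/4)) ^+ 4 = a.
Proof. move=> a0; rewrite powq // divff ?powRr1 // pnatr_eq0. Qed.
Lemma pow34 (a : R) : 0 <= a -> a `^ (3/4) = (a `^ (1/4)) ^+ 3.
Proof. by move=> a0; rewrite powq. Qed.
Lemma pow12 (a : R) : 0 <= a -> a `^ (1/2) = (a `^ (1/4)) ^+ 2.
Proof. by move=> a0; rewrite powq //; congr (_ `^ _); field. Qed.
Lemma powm14 (a : R) : a `^ (-(1/4)) = (a `^ (1/4))^-1.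
Proof. by rewrite powRN. Qed.
End S.


Lemma cardlt (m c : nat) : (c <= m)%N -> #|[pred r : 'I_m | (r < c)%N]| = c.
Proof.
move=> cm; rewrite -sum1_card.
rewrite (eq_bigl (fun r : 'I_m => (r < c)%N)) //.
by rewrite -(big_ord_widen _ (fun _ => 1%N) cm) sum1_card card_ord.
Qed.

Section Fin.
Variable R : realType.
Lemma fin_bound (s t y : R) : 0 < y -> 0 <= s -> s <= y ^+ 3 -> y ^+ 2 / 2 <= t ->
  s / (4 * t ^+ 2) <= y^-1.
Proof.
move=> y0 s0 sy ty.
have t0 : 0 < t by apply: lt_le_trans ty; rewrite divr_gt0 // exprn_gt0.
rewrite ler_pdivrMr; last by rewrite mulr_gt0 // exprn_gt0.
have h : y ^+ 4 <= 4 * t ^+ 2.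
  have : (y ^+ 2 / 2) ^+ 2 <= t ^+ 2.
    by rewrite lerXn2r // nnegrE ?(ltW t0) // divr_ge0 // exprn_ge0 // ltW.
  have -> : (y ^+ 2 / 2) ^+ 2 = y ^+ 4 / 4 by field.
  lra.
have : y^-1 * y ^+ 4 <= y^-1 * (4 * t ^+ 2).
  by rewrite ler_wpM2l // invr_ge0 ltW.
have -> : y^-1 * y ^+ 4 = y ^+ 3.
  by rewrite exprS mulrA mulVf ?mul1r // gt_eqF.
lra.
Qed.

Lemma sq_le (a b : R) : 0 <= a -> a <= b -> a ^+ 2 <= b ^+ 2.
Proof. by move=> a0 ab; rewrite lerXn2r // nnegrE // (le_trans a0 ab). Qed.
End Fin.

Theorem lemma1 (R : realType) (i j : nat) :
  (1 <= i)%N -> (1 <= j)%N -> (16 <= i + j)%N ->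
  prob_unif R _ _ (E1 R i j) <= ((msize R i j)%:R : R) `^ (- (1 / 4)) /\
  prob_unif R _ _ (E2 R i j) <= ((msize R i j)%:R : R) `^ (- (1 / 4)).
Proof.
move=> hi hj hn.
set n := (i + j)%N.
have n0 : (0 : R) <= n%:R by rewrite ler0n.
pose x : R := (n%:R) `^ (1/4).
have x0 : 0 <= x by rewrite powR_ge0.
have x4 : x ^+ 4 = n%:R by rewrite pow4.
pose d := Num.truncn (2 * (n%:R : R) `^ (3/4)).
have hm : msize R i j = (n + d)%N by [].
have dge : 0 <= 2 * (n%:R : R) `^ (3/4) by rewrite mulr_ge0 // powR_ge0.
have /andP [xd1 xd2] : d%:R <= 2 * (n%:R : R) `^ (3/4) < d.+1%:R := truncn_itv dge.
rewrite pow34 // -/x in xd1 xd2; rewrite -[d.+1%:R]natr1 in xd2.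
set m := msize R i j in hm *.
have nm : (n <= m)%N by rewrite hm leq_addr.
have m0 : (0 : R) < m%:R by rewrite ltr0n; apply: leq_trans nm; apply: leq_trans hn.
pose y : R := (m%:R) `^ (1/4).
have y0 : 0 < y by rewrite powR_gt0.
have mR : (m%:R : R) = y ^+ 4 by rewrite pow4 // ltW.
have y4 : y ^+ 4 = n%:R + d%:R by rewrite -mR hm natrD.
set s := ssize R m.
have sge : 0 <= (m%:R : R) `^ (3/4) by rewrite powR_ge0.
have /andP [ys1 ys2] : s%:R <= (m%:R : R) `^ (3/4) < s.+1%:R := truncn_itv sge.
rewrite pow34 ?(ltW m0) // -/y in ys1 ys2; rewrite -[s.+1%:R]natr1 in ys2.
have hkey := @key R n d s x y hn x0 x4 xd1 xd2 (ltW y0) y4 ys2.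
have nR : (n%:R : R) = i%:R + j%:R by rewrite natrD.
rewrite powm14 -/y.
have hk : kthr R j m = j%:R * y^-1 + y ^+ 2 / 2.
  by rewrite /kthr powm14 pow12 ?(ltW m0).
have s0 : (0 : R) <= s%:R by rewrite ler0n.
have yn0 : y != 0 by rewrite gt_eqF.
have m0N : (0 < m)%N by rewrite -(ltr0n R).
have tt0 : (0 : R) < y ^+ 2 / 2 by rewrite divr_gt0 // exprn_gt0.
have fb := @fin_bound R s%:R (y ^+ 2 / 2) y y0 s0 ys1 (lexx _).
have yi0 : 0 <= y^-1 by rewrite invr_ge0 ltW.
split.
- pose A1 := [pred r : 'I_m | (r < j)%N].
  have cA1 : #|A1| = j.
    apply: cardlt; rewrite hm /n; apply: leq_trans (leq_addl i j) (leq_addr d _).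
  have cnt1 : forall f : {ffun 'I_s -> 'I_m}, cnt_low j f = #|[set t | f t \in A1]|.
    by move=> f; apply: eq_card => t; rewrite !inE.
  have hmu : s%:R * j%:R / m%:R <= j%:R * y^-1.
    rewrite mR ler_pdivrMr ?exprn_gt0 //.
    have -> : j%:R * y^-1 * y ^+ 4 = j%:R * y ^+ 3 by field.
    by rewrite mulrC ler_wpM2l // ler0n.
  apply: le_trans (@cheb R s m A1 (E1 R i j) (y ^+ 2 / 2) m0N tt0 _) fb.
  move=> f; rewrite /E1 hk cA1 -cnt1 => hf.
  apply: sq_le; [exact: ltW | lra].
- pose A2 := [pred r : 'I_m | (r < m - i)%N].
  have im : (i <= m)%N by rewrite hm /n -addnA leq_addr.
  have cA2 : #|A2| = (m - i)%N by apply: cardlt; rewrite leq_subr.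
  have cnt2 : forall f : {ffun 'I_s -> 'I_m},
      (cnt_high i f + #|[set t | f t \in A2]|)%N = s.
    move=> f; rewrite addnC -[X in _ = X](card_ord s) -(cardsC [set t | f t \in A2]).
    by congr (_ + _); apply: eq_card => t; rewrite !inE addn1 ltnS leqNgt.
  have hmu2 : y ^+ 2 / 2 + (j%:R * y^-1 + y ^+ 2 / 2) <= s%:R * (y ^+ 4 - i%:R) / y ^+ 4.
    rewrite ler_pdivlMr ?exprn_gt0 //.
    have -> : (y ^+ 2 / 2 + (j%:R * y^-1 + y ^+ 2 / 2)) * y ^+ 4
              = y ^+ 6 + j%:R * y ^+ 3 by field.
    have h1 : y ^+ 3 * (y ^+ 3 + n%:R) <= y ^+ 3 * (y * s%:R).
      by rewrite ler_wpM2l // exprn_ge0 // ltW.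
    have h2 : (i%:R : R) * s%:R <= i%:R * y ^+ 3 by rewrite ler_wpM2l // ler0n.
    rewrite nR in h1; nra.
  apply: le_trans (@cheb R s m A2 (E2 R i j) (y ^+ 2 / 2) m0N tt0 _) fb.
  move=> f; rewrite /E2 hk cA2 natrB // mR => hf.
  have := cnt2 f => /(congr1 (fun k => (k%:R : R))); rewrite natrD => hc.
  rewrite -[X in _ <= X]sqrrN opprB; apply: sq_le; [exact: ltW | lra].
Qed.
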